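(* Let $r\in\mathbb{N}_0$, $m=r+1$, and let $x_0\le x_1\le\dots\le x_m$ be real numbers with $x_0<x_m$. If $f\in C^{(r)}[x_0,x_m]$, then \[ \big|[x_0,\dots,x_m;f]\big|\le c\,\Lambda_r(x_0,\dots,x_m;\omega_1), \] where $\omega_1(t):=\omega_1(f^{(r)},t;[x_0,x_m])$ and the constant $c$ depends only on $m$.
   Context: Modulus of smoothness: for $g\in C[a,b]$, $k\in\mathbb{N}$, $\Delta^k_u(g,x;[a,b]):=\sum_{i=0}^k(-1)^i\binom ki g(x+(k/2-i)u)$ if $x\pm(k/2)u\in[a,b]$, else $0$; $\omega_k(g,t;[a,b]):=\sup_{0<u\le t}\|\Delta^k_u(g,\cdot;[a,b])\|_{C[a,b]}$. Divided differences with repeated points: $[x_0;f]:=f(x_0)$; if $x_0=\dots=x_m$, $[x_0,\dots,x_m;f]:=f^{(m)}(x_0)/m!$; otherwise for $j^*$ with $x_{j^*}\ne x_0$, $[x_0,\dots,x_m;f]:=\frac{[x_1,\dots,x_m;f]-[x_0,\dots,x_{j^*-1},x_{j^*+1},\dots,x_m;f]}{x_{j^*}-x_0}$. For ordered $y_0\le\dots\le y_n$: $\mathcal{Q}_{n,r}:=\{(p,q):0\le p,q\le n,\ q-p\ge r+1\}$, $y_{-1}:=y_0-(y_n-y_0)$, $y_{n+1}:=y_n+(y_n-y_0)$, $d(p,q):=\min\{y_{q+1}-y_p,y_q-y_{p-1}\}$, and for nondecreasing $\varphi\in C[0,\infty]$ with $\varphi(0)=0$, $\Lambda_{p,q,r}(y_0,\dots,y_n;\varphi):=\frac{\int_{y_q-y_p}^{d(p,q)}u^{p+r-q-1}\varphi(u)du}{\prod_{i=0}^{p-1}(y_q-y_i)\prod_{i=q+1}^{n}(y_i-y_p)}$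 (empty products $=1$), $\Lambda_r(y_0,\dots,y_n;\varphi):=\max_{(p,q)\in\mathcal{Q}_{n,r}}\Lambda_{p,q,r}(y_0,\dots,y_n;\varphi)$. *)

(* Defs.v *)
From Stdlib Require Import Reals Lra Lia List.
From Coquelicot Require Import Coquelicot.
Import ListNotations.
Open Scope R_scope.

Definition sym_diff (k : nat) (g : R -> R) (u x a b : R) : R :=
  if Rle_dec a (x - INR k / 2 * u) then
    if Rle_dec (x + INR k / 2 * u) b then
      sum_f_R0 (fun i => (-1) ^ i * Stdlib.Reals.Binomial.C k i
                          * g (x + (INR k / 2 - INR i) * u)) k
    else 0
  else 0.

(* omega_k(g,t;[a,b]) = sup_{0<u<=t} sup_{x in [a,b]} |Delta^k_u(g,x;[a,b])|
   (the empty sup, at t <= 0, is taken to be 0) *)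
Definition omega (k : nat) (g : R -> R) (t a b : R) : R :=
  real (Lub_Rbar (fun z => exists u x, 0 < u <= t /\ a <= x <= b /\
                              z = Rabs (sym_diff k g u x a b))).

Definition cont_within (a b : R) (g : R -> R) : Prop :=
  forall x, a <= x <= b -> forall eps, 0 < eps -> exists delta, 0 < delta /\
    forall y, a <= y <= b -> Rabs (y - x) < delta -> Rabs (g y - g x) < eps.

Definition deriv_within (a b : R) (g g' : R -> R) : Prop :=
  forall x, a <= x <= b -> forall eps, 0 < eps -> exists delta, 0 < delta /\
    forall y, a <= y <= b -> Rabs (y - x) < delta ->
      Rabs (g y - g x - g' x * (y - x)) <= eps * Rabs (y - x).

(* D 0, D 1, ..., D r are f, f', ..., f^(r), all continuous on [a,b] *)
Definition Cr_on (a b : R) (r : nat) (D : nat -> R -> R) : Prop :=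
  (forall k, (k <= r)%nat -> cont_within a b (D k)) /\
  (forall k, (k < r)%nat -> deriv_within a b (D k) (D (S k))).

Definition Reqb (x y : R) : bool := if Req_EM_T x y then true else false.

Fixpoint first_neq (x0 : R) (l : list R) : nat :=
  match l with
  | nil => O
  | y :: l' => if Reqb y x0 then S (first_neq x0 l') else O
  end.

Definition remove_at (j : nat) (l : list R) : list R :=
  firstn j l ++ skipn (S j) l.

Fixpoint dd (D : nat -> R -> R) (n : nat) (l : list R) : R :=
  match n with
  | O => D O (hd 0 l)
  | S n' =>
      let x0 := hd 0 l in
      if forallb (fun y => Reqb y x0) l then D n x0 / INR (Stdlib.Arith.Factorial.fact n)
      else
        let j := first_neq x0 l in
        (dd D n' (tl l) - dd D n' (remove_at j l)) / (nth j l 0 - x0)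
  end.

Definition divdiff (D : nat -> R -> R) (l : list R) : R :=
  dd D (length l - 1) l.

Definition prodR (l : list R) : R := fold_right Rmult 1 l.

(* y_{p-1} with the convention y_{-1} = y_0 - (y_n - y_0) *)
Definition y_before (n : nat) (y : nat -> R) (p : nat) : R :=
  match p with O => y O - (y n - y O) | S p' => y p' end.
(* y_{q+1} with the convention y_{n+1} = y_n + (y_n - y_0) *)
Definition y_after (n : nat) (y : nat -> R) (q : nat) : R :=
  if Nat.eqb q n then y n + (y n - y O) else y (S q).

Definition dpq (n : nat) (y : nat -> R) (p q : nat) : R :=
  Rmin (y_after n y q - y p) (y q - y_before n y p).

Definition Lambda_pqr (n : nat) (y : nat -> R) (phi : R -> R) (p q r : nat) : R :=
  RInt (fun u => powerRZ u (Z.of_nat p + Z.of_nat r - Z.of_nat q - 1) * phi u)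
       (y q - y p) (dpq n y p q)
  / (prodR (map (fun i => y q - y i) (seq 0 p))
     * prodR (map (fun i => y i - y p) (seq (S q) (n - q)))).

Definition Qnr (n r : nat) : list (nat * nat) :=
  filter (fun pq => Nat.leb (fst pq + S r) (snd pq))
         (list_prod (seq 0 (S n)) (seq 0 (S n))).

Definition maxlist (l : list R) : R :=
  match l with nil => 0 | a :: l' => fold_right Rmax a l' end.

Definition Lambda_r (n r : nat) (y : nat -> R) (phi : R -> R) : R :=
  maxlist (map (fun pq => Lambda_pqr n y phi (fst pq) (snd pq) r) (Qnr n r)).

(* Main.v *)
Require Import Defs.
From Stdlib Require Import Reals List Lra Lia Sorted Factorial.
From Coquelicot Require Import Coquelicot.
Import ListNotations.
Open Scope R_scope.

Lemma Reqb_refl c : Reqb c c = true.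
Proof. unfold Reqb; destruct (Req_EM_T c c); congruence. Qed.
Lemma Reqb_neq y c : y <> c -> Reqb y c = false.
Proof. intros H; unfold Reqb; destruct (Req_EM_T y c); congruence. Qed.

Lemma dd_S D n l : dd D (S n) l =
  if forallb (fun y => Reqb y (hd 0 l)) l then D (S n) (hd 0 l) / INR (fact (S n))
  else (dd D n (tl l) - dd D n (remove_at (first_neq (hd 0 l) l) l)) /
       (nth (first_neq (hd 0 l) l) l 0 - hd 0 l).
Proof. reflexivity. Qed.

Lemma forallb_repeat c k : forallb (fun y => Reqb y c) (repeat c k) = true.
Proof. induction k; simpl; auto. rewrite Reqb_refl; auto. Qed.

Lemma dd_repeat D n c : dd D n (repeat c (S n)) = D n c / INR (fact n).
Proof.
  destruct n. simpl. field.
  rewrite dd_S. simpl hd. rewrite forallb_repeat. reflexivity.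
Qed.

Lemma first_neq_rep x0 y R a : y <> x0 -> first_neq x0 (repeat x0 a ++ y :: R) = a.
Proof.
  intros H; induction a; simpl. rewrite Reqb_neq; auto.
  rewrite Reqb_refl, IHa; auto.
Qed.

Lemma remove_at_rep x0 y R a : remove_at a (repeat x0 a ++ y :: R) = repeat x0 a ++ R.
Proof.
  unfold remove_at; induction a; simpl; auto. f_equal; exact IHa.
Qed.

Lemma nth_rep x0 y R a : nth a (repeat x0 a ++ y :: R) 0 = y.
Proof. induction a; simpl; auto. Qed.

Lemma dd_step D n x0 y a R : y <> x0 ->
  dd D (S n) (repeat x0 (S a) ++ y :: R) =
  (dd D n (repeat x0 a ++ y :: R) - dd D n (repeat x0 (S a) ++ R)) / (y - x0).
Proof.
  intros H. rewrite dd_S.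
  replace (hd 0 (repeat x0 (S a) ++ y :: R)) with x0 by reflexivity.
  rewrite forallb_app, forallb_repeat. simpl forallb at 1. rewrite Reqb_neq by auto.
  simpl andb. cbv iota.
  rewrite first_neq_rep, remove_at_rep, nth_rep by auto. reflexivity.
Qed.

Lemma decomp t x0 : x0 :: t = repeat x0 (S (length t)) \/
  exists (a : nat) (y : R) (rs : list R), y <> x0 /\ x0 :: t = repeat x0 (S a) ++ y :: rs.
Proof.
  revert x0; induction t as [|y t IH]; intros x0. left; reflexivity.
  destruct (Req_EM_T y x0) as [->|Hne].
  - destruct (IH x0) as [H|(a & y' & rs & Hy & H)].
    + left. simpl in *. rewrite H. reflexivity.
    + right. exists (S a), y', rs. split; auto. rewrite H. reflexivity.
  - right. exists 0%nat, y, t. split; auto.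
Qed.

Fixpoint Gf (D : nat -> R -> R) (z : R) (i : nat) (t : R) : R :=
  match i with
  | O => (D O z - D O t) / (z - t)
  | S i' => (INR (S i') * Gf D z i' t - D (S i') t) / (z - t)
  end.

Definition G (D : nat -> R -> R) (z : R) (i : nat) (t : R) : R :=
  if Req_EM_T t z then D (S i) z / INR (S i) else Gf D z i t.

Lemma Gf_S D z i t : Gf D z (S i) t = (INR (S i) * Gf D z i t - D (S i) t) / (z - t).
Proof. reflexivity. Qed.

Lemma G_z D z i : G D z i z = D (S i) z / INR (S i).
Proof. unfold G; destruct (Req_EM_T z z); congruence. Qed.
Lemma G_ne D z i t : t <> z -> G D z i t = Gf D z i t.
Proof. intros H; unfold G; destruct (Req_EM_T t z); congruence. Qed.

Ltac nzt := repeat split; try (apply not_0_INR; first [apply fact_neq_0 | lia]).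

Lemma red_last D k : forall l z, length l = S k ->
  dd D (S k) (l ++ [z]) = dd (G D z) k l.
Proof.
  induction k as [|k IH]; intros l z Hl.
  - destruct l as [|x0 [|? ?]]; simpl in Hl; try lia.
    destruct (Req_EM_T x0 z) as [->|Hne].
    + change (dd D 1 (repeat z 2) = dd (G D z) 0 [z]). rewrite dd_repeat.
      change (dd (G D z) 0 [z]) with (G D z 0 z). rewrite G_z. simpl. field.
    + change (dd D 1 (repeat x0 1 ++ [z]) = dd (G D z) 0 [x0]). rewrite dd_step by auto.
      change (dd (G D z) 0 [x0]) with (G D z 0 x0). rewrite G_ne by auto. simpl. field.
      intro; apply Hne; lra.
  - destruct l as [|x0 t]; [simpl in Hl; lia|].
    destruct (decomp t x0) as [H|(a & y & rs & Hy & H)]; rewrite H.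
    + simpl in Hl. injection Hl as Hl. rewrite Hl.
      destruct (Req_EM_T x0 z) as [->|Hne].
      * rewrite <- repeat_cons. change (z :: repeat z (S (S k))) with (repeat z (S (S (S k)))). rewrite !dd_repeat.
        rewrite G_z.
        rewrite (fact_simpl (S k)). rewrite mult_INR. field.
        nzt.
      * pose proof (dd_step D (S k) x0 z (S k) []) as H1. rewrite app_nil_r in H1.
        rewrite H1 by auto.
        rewrite dd_repeat.
        replace (repeat x0 (S k)) with (repeat x0 (S k)) by reflexivity.
        rewrite IH by (rewrite repeat_length; auto).
        rewrite !dd_repeat. rewrite !G_ne by auto. rewrite Gf_S.
        rewrite (fact_simpl k). rewrite mult_INR.
        field. repeat split; try (intro; apply Hne; lra); nzt.
    + rewrite H in Hl. clear H.
      assert (Hl2 : length (repeat x0 a ++ y :: rs) = S k).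
      { rewrite length_app, repeat_length in *. simpl in *. lia. }
      assert (Hl3 : length (repeat x0 (S a) ++ rs) = S k).
      { rewrite length_app, repeat_length in *. simpl in *. lia. }
      replace ((repeat x0 (S a) ++ y :: rs) ++ [z]) with (repeat x0 (S a) ++ y :: (rs ++ [z]))
        by (rewrite <- app_assoc; reflexivity).
      rewrite !dd_step by auto.
      replace (repeat x0 a ++ y :: rs ++ [z]) with ((repeat x0 a ++ y :: rs) ++ [z])
        by (rewrite <- app_assoc; reflexivity).
      replace (repeat x0 (S a) ++ rs ++ [z]) with ((repeat x0 (S a) ++ rs) ++ [z])
        by (rewrite <- app_assoc; reflexivity).
      rewrite !IH by auto. reflexivity.
Qed.


Lemma SS_app_inv l1 l2 : StronglySorted Rle (l1 ++ l2) ->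
  StronglySorted Rle l1 /\ StronglySorted Rle l2 /\
  (forall u v, In u l1 -> In v l2 -> u <= v).
Proof.
  induction l1 as [|a l1 IH]; simpl; intros H.
  - split; [constructor|split; [auto| intros u v []]].
  - inversion H as [|? ? Ha Hb]; subst. destruct (IH Ha) as (A & B & C).
    rewrite Forall_forall in Hb.
    repeat split; auto.
    + constructor; auto. rewrite Forall_forall; intros x Hx; apply Hb, in_or_app; auto.
    + intros u v [<-|Hu] Hv; auto. apply Hb, in_or_app; auto.
Qed.

Lemma SS_app l1 l2 : StronglySorted Rle l1 -> StronglySorted Rle l2 ->
  (forall u v, In u l1 -> In v l2 -> u <= v) -> StronglySorted Rle (l1 ++ l2).
Proof.
  induction l1 as [|a l1 IH]; simpl; intros H1 H2 H3; auto.
  inversion H1; subst. constructor.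
  - apply IH; auto.
  - rewrite Forall_forall in *; intros x Hx. apply in_app_or in Hx as [Hx|Hx]; auto.
Qed.

Lemma SS_remove l1 y l2 : StronglySorted Rle (l1 ++ y :: l2) -> StronglySorted Rle (l1 ++ l2).
Proof.
  intros H. apply SS_app_inv in H as (A & B & C). inversion B; subst.
  apply SS_app; auto. intros u v Hu Hv; apply C; simpl; auto.
Qed.

Lemma last_rep x0 k : last (repeat x0 (S k)) 0 = x0.
Proof. induction k; simpl in *; auto. Qed.

Lemma rev_case (l : list R) : l = [] \/ exists l' z, l = l' ++ [z].
Proof.
  destruct l as [|a l]; [left; auto|right].
  exists (removelast (a :: l)), (last (a :: l) 0). apply app_removelast_last; discriminate.
Qed.

Lemma all_eq_rep (l : list R) z : (forall v, In v l -> v = z) -> l = repeat z (length l).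
Proof.
  induction l; simpl; intros H; auto. rewrite (H a), IHl; auto. rewrite repeat_length; auto.
Qed.

Lemma last3 (L : list R) y rs z : last (L ++ y :: rs ++ [z]) 0 = z.
Proof. replace (L ++ y :: rs ++ [z]) with ((L ++ y :: rs) ++ [z]) by (rewrite <- app_assoc; reflexivity); apply last_last. Qed.
Lemma rl3 (L : list R) y rs z : removelast (L ++ y :: rs ++ [z]) = L ++ y :: rs.
Proof. replace (L ++ y :: rs ++ [z]) with ((L ++ y :: rs) ++ [z]) by (rewrite <- app_assoc; reflexivity); apply removelast_last. Qed.
Lemma last2 (L : list R) rs z : last (L ++ rs ++ [z]) 0 = z.
Proof. rewrite app_assoc; apply last_last. Qed.
Lemma rl2 (L : list R) rs z : removelast (L ++ rs ++ [z]) = L ++ rs.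
Proof. rewrite app_assoc; apply removelast_last. Qed.

Lemma std D n : forall l, StronglySorted Rle l -> length l = S (S n) ->
  hd 0 l < last l 0 ->
  dd D (S n) l = (dd D n (tl l) - dd D n (removelast l)) / (last l 0 - hd 0 l).
Proof.
  induction n as [|n IH]; intros l Hs Hl Hlt.
  - destruct l as [|x0 [|z [|? ?]]]; simpl in Hl; try lia. simpl in Hlt |- *.
    change (dd D 1 (repeat x0 1 ++ [z]) = (dd D 0 [z] - dd D 0 [x0]) / (z - x0)).
    rewrite dd_step by lra. reflexivity.
  - destruct l as [|x0 t]; [simpl in Hl; lia|].
    destruct (decomp t x0) as [H|(a & y & rs & Hy & H)]; rewrite H in *.
    { rewrite last_rep in Hlt. simpl in Hlt. lra. }
    clear H t. simpl hd in *.
    assert (Hxy : x0 <= y).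
    { apply SS_app_inv in Hs as (_ & _ & C). apply C; simpl; auto. }
    destruct (rev_case rs) as [->|(rs' & z & ->)].
    + replace (last (repeat x0 (S a) ++ [y]) 0) with y by (rewrite last_last; auto).
      rewrite removelast_last, dd_step by auto. rewrite app_nil_r. reflexivity.
    + replace (repeat x0 (S a) ++ y :: rs' ++ [z]) with ((repeat x0 (S a) ++ y :: rs') ++ [z])
        in * by (rewrite <- app_assoc; reflexivity).
      rewrite last_last in *. rewrite removelast_last.
      assert (Hyz : y <= z).
      { apply SS_app_inv in Hs as (_ & _ & C). apply C; [apply in_or_app; right; simpl; auto | simpl; auto]. }
      replace ((repeat x0 (S a) ++ y :: rs') ++ [z]) with (repeat x0 (S a) ++ y :: (rs' ++ [z]))
        in * by (rewrite <- app_assoc; reflexivity).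
      rewrite dd_step by auto.
      change (tl (repeat x0 (S a) ++ y :: rs' ++ [z])) with (repeat x0 a ++ y :: rs' ++ [z]).
      destruct (Req_EM_T y z) as [<-|Hyz'].
      * assert (Hr : rs' = repeat y (length rs')).
        { apply all_eq_rep. intros v Hv.
          apply SS_app_inv in Hs as (_ & B & _). inversion B; subst.
          rewrite Forall_forall in H2. assert (y <= v) by (apply H2, in_or_app; auto).
          apply SS_app_inv in H1 as (_ & _ & C). assert (v <= y) by (apply C; simpl; auto). lra. }
        rewrite Hr. rewrite repeat_cons. reflexivity.
      * assert (Hyz2 : y < z) by lra.
        assert (Hx0y : x0 < y) by lra.
        set (Ey := dd D n (repeat x0 a ++ y :: rs')).
        set (E0 := dd D n (repeat x0 (S a) ++ rs')).
        set (Ez := dd D n (repeat x0 a ++ rs' ++ [z])).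
        assert (HC : dd D (S n) (repeat x0 (S a) ++ y :: rs') = (Ey - E0) / (y - x0)).
        { rewrite dd_step by auto. reflexivity. }
        assert (HB : dd D (S n) (repeat x0 (S a) ++ rs' ++ [z]) = (Ez - E0) / (z - x0)).
        { rewrite IH.
          - simpl hd. rewrite last2, rl2. reflexivity.
          - eapply SS_remove; exact Hs.
          - rewrite !length_app, repeat_length in *; simpl in *; rewrite ?length_app in Hl; simpl in Hl; lia.
          - simpl hd; rewrite last2; lra. }
        assert (HA : dd D (S n) (repeat x0 a ++ y :: rs' ++ [z]) * (z - y) = Ez - Ey).
        { destruct a as [|a'].
          - simpl repeat in *. simpl app in *. rewrite IH.
            + simpl hd; simpl tl. pose proof (last3 [] y rs' z) as E1; pose proof (rl3 [] y rs' z) as E2.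
              simpl app in E1, E2. rewrite E1, E2.
              unfold Ez, Ey. simpl. field. lra.
            + inversion Hs; auto.
            + simpl in *. rewrite !length_app in *; simpl in *; lia.
            + pose proof (last3 [] y rs' z) as E1; simpl app in E1. rewrite E1. simpl. lra.
          - pose proof (dd_step D n x0 y a' (rs' ++ [z]) Hy) as Hst.
            pose proof (IH (repeat x0 (S a') ++ y :: rs' ++ [z])) as Hi.
            rewrite last3, rl3 in Hi. simpl hd in Hi. simpl tl in Hi.
            specialize (Hi ltac:(inversion Hs; auto)
              ltac:(simpl in *; rewrite !length_app, repeat_length in *; simpl in *; lia)
              ltac:(lra)).
            unfold Ez, Ey.
            set (A := dd D (S n) (repeat x0 (S a') ++ y :: rs' ++ [z])) in *.
            set (F := dd D n (repeat x0 a' ++ y :: rs' ++ [z])) in *.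
            assert (E1 : A * (z - x0) = F - dd D n (repeat x0 (S a') ++ y :: rs'))
              by (rewrite Hi; field; lra).
            assert (E2 : A * (y - x0) = F - dd D n (repeat x0 (S a') ++ rs' ++ [z]))
              by (rewrite Hst; field; lra).
            replace (A * (z - y)) with (A * (z - x0) - A * (y - x0)) by ring.
            rewrite E1, E2. ring. }
        rewrite HB, HC.
        set (A := dd D (S n) (repeat x0 a ++ y :: rs' ++ [z])) in *.
        replace A with ((Ez - Ey) / (z - y)) by (rewrite <- HA; field; lra).
        field. repeat split; lra.
Qed.


Definition clamp (a b x : R) : R := Rmax a (Rmin b x).

Lemma clamp_in a b y : a <= b -> a <= clamp a b y <= b.
Proof. intros; unfold clamp, Rmax, Rmin; repeat destruct Rle_dec; lra. Qed.
Lemma clamp_id a b y : a <= y <= b -> clamp a b y = y.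
Proof. intros; unfold clamp, Rmax, Rmin; repeat destruct Rle_dec; lra. Qed.
Lemma clamp_lip a b x y : a <= x <= b -> Rabs (clamp a b y - x) <= Rabs (y - x).
Proof.
  intros; unfold clamp, Rmax, Rmin; repeat destruct Rle_dec;
  unfold Rabs; repeat destruct Rcase_abs; lra.
Qed.

Lemma cw_cont a b h : a <= b -> cont_within a b h ->
  forall x, a <= x <= b -> continuity_pt (fun y => h (clamp a b y)) x.
Proof.
  intros Hab Hc x Hx. unfold continuity_pt, continue_in, limit1_in, limit_in.
  intros eps He. destruct (Hc x Hx eps He) as (d & Hd & H). exists d. split; auto.
  intros y [_ Hy]. simpl in *. unfold R_dist in *. rewrite (clamp_id a b x) by auto.
  apply H. apply clamp_in; auto. eapply Rle_lt_trans; [apply clamp_lip; auto|]; auto.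
Qed.

Lemma cont_cw a b h :
  (forall x, a <= x <= b -> continuity_pt (fun y => h (clamp a b y)) x) -> cont_within a b h.
Proof.
  intros Hc x Hx eps He. specialize (Hc x Hx).
  unfold continuity_pt, continue_in, limit1_in, limit_in in Hc.
  destruct (Hc eps He) as (d & Hd & H). exists d. split; auto.
  intros y Hy Hyx. destruct (Req_dec y x) as [->|Hne].
  - unfold Rminus; rewrite Rplus_opp_r, Rabs_R0; auto.
  - specialize (H y). simpl in H. unfold R_dist in H.
    rewrite !clamp_id in H by auto. apply H. split; auto. unfold D_x, no_cond; split; auto.
Qed.

Lemma cw_gen a b (F : R -> R) :
  (a <= b -> forall x, a <= x <= b -> continuity_pt (fun y => F (clamp a b y)) x) ->
  cont_within a b F.
Proof.
  intros H. destruct (Rle_dec a b) as [Hab|Hab].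
  - apply cont_cw; auto.
  - intros x Hx; lra.
Qed.

Lemma cw_const a b c : cont_within a b (fun _ => c).
Proof. intros x _ eps He; exists 1; split; [lra|]; intros. unfold Rminus; rewrite Rplus_opp_r, Rabs_R0; auto. Qed.

Lemma cw_id a b : cont_within a b (fun t => t).
Proof. intros x _ eps He; exists eps; split; auto. Qed.

Lemma cw_plus a b f g : cont_within a b f -> cont_within a b g -> cont_within a b (fun t => f t + g t).
Proof.
  intros Hf Hg. apply cw_gen; intros Hab x Hx.
  apply continuity_pt_plus; apply cw_cont; auto.
Qed.
Lemma cw_minus a b f g : cont_within a b f -> cont_within a b g -> cont_within a b (fun t => f t - g t).
Proof.
  intros Hf Hg. apply cw_gen; intros Hab x Hx.
  apply continuity_pt_minus; apply cw_cont; auto.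
Qed.
Lemma cw_mult a b f g : cont_within a b f -> cont_within a b g -> cont_within a b (fun t => f t * g t).
Proof.
  intros Hf Hg. apply cw_gen; intros Hab x Hx.
  apply continuity_pt_mult; apply cw_cont; auto.
Qed.
Lemma cw_div a b f g : cont_within a b f -> cont_within a b g ->
  (forall t, a <= t <= b -> g t <> 0) -> cont_within a b (fun t => f t / g t).
Proof.
  intros Hf Hg Hn. apply cw_gen; intros Hab x Hx.
  apply continuity_pt_div; try (apply cw_cont; auto). rewrite clamp_id; auto.
Qed.
Lemma cw_pow a b f n : cont_within a b f -> cont_within a b (fun t => f t ^ n).
Proof.
  intros Hf. induction n; simpl. apply cw_const. apply cw_mult; auto.
Qed.
Lemma cw_sub a b a' b' f : a <= a' -> b' <= b -> cont_within a b f -> cont_within a' b' f.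
Proof.
  intros H1 H2 Hf x Hx eps He. destruct (Hf x ltac:(lra) eps He) as (d & Hd & H).
  exists d; split; auto. intros y Hy; apply H; lra.
Qed.

Lemma mono p q h h' : p <= q -> cont_within p q h ->
  (forall x, p < x < q -> is_derive h x (h' x)) ->
  (forall x, p < x < q -> h' x <= 0) -> h q <= h p.
Proof.
  intros Hpq Hc Hd Hn. destruct (Req_dec p q) as [<-|Hne]; [lra|].
  set (df := fun x => if Rlt_dec p x then if Rlt_dec x q then h' x else 0 else 0).
  destruct (MVT_gen (fun y => h (clamp p q y)) p q df) as (c & Hc1 & Hc2).
  - rewrite Rmin_left, Rmax_right by lra. intros x Hx.
    unfold df. destruct Rlt_dec; [|lra]. destruct Rlt_dec; [|lra].
    apply is_derive_ext_loc with h; auto.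
    assert (He : 0 < Rmin (x - p) (q - x)) by (apply Rmin_glb_lt; lra).
    exists (mkposreal _ He). intros t Ht. simpl in Ht.
    unfold ball in Ht; simpl in Ht; unfold AbsRing_ball, abs, minus, plus, opp in Ht; simpl in Ht.
    assert (Rabs (t - x) < Rmin (x - p) (q - x)) by exact Ht.
    assert (t - x < Rmin (x - p) (q - x) /\ x - t < Rmin (x - p) (q - x)) as [H1 H2].
    { unfold Rabs in *; destruct Rcase_abs; lra. }
    pose proof (Rmin_l (x - p) (q - x)); pose proof (Rmin_r (x - p) (q - x)).
    rewrite clamp_id; auto; lra.
  - rewrite Rmin_left, Rmax_right by lra. intros x Hx. apply cw_cont; auto.
  - rewrite !clamp_id in Hc2 by lra.
    assert (df c <= 0).
    { unfold df. destruct Rlt_dec; [|lra]. destruct Rlt_dec; [|lra]. apply Hn; lra. }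
    assert (df c * (q - p) <= 0). { apply Rmult_le_0_r; lra. }
    lra.
Qed.


Definition Cls (k : nat) (a b : R) (D : nat -> R -> R) : Prop :=
  (forall j, (j <= k)%nat -> cont_within a b (D j)) /\
  (forall j, (j < k)%nat -> forall x, a < x < b -> is_derive (D j) x (D (S j) x)).

Fixpoint Phi (D : nat -> R -> R) (z : R) (i : nat) (t : R) : R :=
  match i with
  | O => D O z - D O t
  | S i' => Phi D z i' t - D (S i') t * (z - t) ^ (S i') / INR (fact (S i'))
  end.

Lemma Phi_z D z i : Phi D z i z = 0.
Proof. induction i; cbn [Phi]. ring. rewrite IHi. replace (z - z) with 0 by ring.
  rewrite pow_i by lia. field. nzt. Qed.

Lemma Phi_Gf D z i t : t <> z -> Gf D z i t * (z - t) ^ (S i) = INR (fact i) * Phi D z i t.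
Proof.
  intros H. assert (z - t <> 0) by (intro; apply H; lra).
  induction i.
  - simpl. field. auto.
  - rewrite Gf_S. cbn [Phi]. rewrite (fact_simpl i), mult_INR.
    replace ((INR (S i) * Gf D z i t - D (S i) t) / (z - t) * (z - t) ^ S (S i))
      with (INR (S i) * (Gf D z i t * (z - t) ^ S i) - D (S i) t * (z - t) ^ (S i))
      by (simpl; field; auto).
    rewrite IHi. field. nzt.
Qed.

Lemma Phi_cont n a b D z i : Cls n a b D -> (i <= n)%nat -> cont_within a b (Phi D z i).
Proof.
  intros [Hc _]. induction i; intros Hi; cbn [Phi].
  - apply cw_minus. apply cw_const. apply Hc; lia.
  - apply cw_minus. apply IHi; lia.
    apply cw_div. apply cw_mult. apply Hc; lia. apply cw_pow. apply cw_minus. apply cw_const. apply cw_id.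
    apply cw_const. intros; nzt.
Qed.

Lemma Phi_der n a b D z i : Cls n a b D -> (i < n)%nat -> forall s, a < s < b ->
  is_derive (Phi D z i) s (- D (S i) s * (z - s) ^ i / INR (fact i)).
Proof.
  intros [_ Hd]. induction i; intros Hi s Hs; cbn [Phi].
  - assert (H0 := Hd 0%nat Hi s Hs).
    auto_derive. exists (D 1%nat s); auto.
    replace (Derive (fun x => D 0%nat x) s) with (D 1%nat s)
        by (symmetry; apply is_derive_unique; auto).
    simpl. lra.
  - assert (H0 := Hd (S i) Hi s Hs). assert (H1 := IHi ltac:(lia) s Hs).
    set (P := Phi D z i) in *.
    auto_derive.
    + split. exists (- D (S i) s * (z - s) ^ i / INR (fact i)); auto.
      split. exists (D (S (S i)) s); auto. split; auto. nzt.
    + replace (Derive (fun x => P x) s) with (- D (S i) s * (z - s) ^ i / INR (fact i))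
        by (symmetry; apply is_derive_unique; auto).
      replace (Derive (fun x => D (S i) x) s) with (D (S (S i)) s)
        by (symmetry; apply is_derive_unique; auto).
      rewrite (fact_simpl i), mult_INR. rewrite S_INR.
      replace (match i with | 0%nat => 1 | S _ => INR i + 1 end) with (INR i + 1)
        by (destruct i; simpl; lra).
      replace (INR (fact i + i * fact i)) with ((INR i + 1) * INR (fact i))
        by (rewrite <- S_INR, <- mult_INR; reflexivity).
      rewrite <- tech_pow_Rmult. unfold Rminus. field. split; [nzt|]. pose proof (pos_INR i); lra.
Qed.


Lemma lagr n a b D z t i m M : Cls n a b D -> (i < n)%nat -> a <= t < z -> z <= b ->
  (forall s, t <= s <= z -> m <= D (S i) s <= M) ->
  m <= INR (S i) * Gf D z i t <= M.
Proof.
  intros HC Hi Ht Hz Hb.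
  assert (Hne : t <> z) by lra.
  pose proof (Phi_Gf D z i t Hne) as HPG.
  set (P := (z - t) ^ S i). assert (HP : 0 < P) by (apply pow_lt; lra).
  fold P in HPG.
  assert (Hf : 0 < INR (fact (S i))) by (apply lt_0_INR, lt_O_fact).
  assert (Hf' : INR (fact (S i)) = INR (S i) * INR (fact i)) by (rewrite fact_simpl, mult_INR; auto).
  assert (Hder : forall c, forall s, t < s < z ->
    is_derive (fun s => c * (z - s) ^ S i / INR (fact (S i))) s (- c * (z - s) ^ i / INR (fact i))).
  { intros c s Hs. auto_derive. nzt.
    replace (INR (fact i + i * fact i)) with ((INR i + 1) * INR (fact i))
        by (rewrite <- S_INR, <- mult_INR; reflexivity).
    replace (match i with | 0%nat => 1 | S _ => INR i + 1 end) with (INR i + 1)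
        by (destruct i; simpl; lra).
    unfold Rminus. field. split; [nzt|]. pose proof (pos_INR i); lra. }
  assert (Hcont : forall c, cont_within t z (fun s => c * (z - s) ^ S i / INR (fact (S i)))).
  { intros c. apply cw_div. apply cw_mult. apply cw_const. apply cw_pow. apply cw_minus.
    apply cw_const. apply cw_id. apply cw_const. intros; lra. }
  assert (HPc : cont_within t z (Phi D z i)).
  { apply (cw_sub a b); try lra. apply (Phi_cont n a b); auto; lia. }
  split.
  -
    assert (H := mono t z (fun s => Phi D z i s - m * (z - s) ^ S i / INR (fact (S i)))
      (fun s => (- D (S i) s * (z - s) ^ i / INR (fact i)) - (- m * (z - s) ^ i / INR (fact i)))).
    cbv beta in H. rewrite Phi_z in H. replace (z - z) with 0 in H by ring. rewrite pow_i in H by lia.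
    assert (Hm : m * P <= INR (fact (S i)) * Phi D z i t).
    { assert (0 - m * 0 / INR (fact (S i)) <= Phi D z i t - m * P / INR (fact (S i))).
      { unfold P. apply H.
        - lra.
        - apply cw_minus; auto.
        - intros s Hs. apply (is_derive_minus (Phi D z i)).
          apply (Phi_der n a b); auto; lra. apply Hder; auto.
        - intros s Hs. assert (HD := Hb s ltac:(lra)).
          assert (0 < (z - s) ^ i) by (apply pow_lt; lra).
          assert (0 < INR (fact i)) by (apply lt_0_INR, lt_O_fact).
          replace (- D (S i) s * (z - s) ^ i / INR (fact i) - - m * (z - s) ^ i / INR (fact i))
            with ((m - D (S i) s) * ((z - s) ^ i / INR (fact i))) by (field; lra).
          assert (0 < (z - s) ^ i / INR (fact i)) by (apply Rdiv_lt_0_compat; lra).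
          nra. }
      assert (m * P / INR (fact (S i)) <= Phi D z i t) by lra.
      apply (Rmult_le_compat_l (INR (fact (S i)))) in H1; [|lra].
      replace (INR (fact (S i)) * (m * P / INR (fact (S i)))) with (m * P) in H1 by (field; lra).
      lra. }
    assert (HG : Gf D z i t = INR (fact i) * Phi D z i t / P) by (rewrite <- HPG; field; lra).
    rewrite HG. rewrite Hf' in Hm.
    apply (Rmult_le_reg_r P); auto.
    replace (INR (S i) * (INR (fact i) * Phi D z i t / P) * P) with
      (INR (S i) * INR (fact i) * Phi D z i t) by (field; lra). lra.
  -
    assert (H := mono t z (fun s => M * (z - s) ^ S i / INR (fact (S i)) - Phi D z i s)
      (fun s => (- M * (z - s) ^ i / INR (fact i)) - (- D (S i) s * (z - s) ^ i / INR (fact i)))).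
    cbv beta in H. rewrite Phi_z in H. replace (z - z) with 0 in H by ring. rewrite pow_i in H by lia.
    assert (Hm : INR (fact (S i)) * Phi D z i t <= M * P).
    { assert (M * 0 / INR (fact (S i)) - 0 <= M * P / INR (fact (S i)) - Phi D z i t).
      { unfold P. apply H.
        - lra.
        - apply cw_minus; auto.
        - intros s Hs. apply (is_derive_minus _ (Phi D z i)).
          apply Hder; auto. apply (Phi_der n a b); auto; lra.
        - intros s Hs. assert (HD := Hb s ltac:(lra)).
          assert (0 < (z - s) ^ i) by (apply pow_lt; lra).
          assert (0 < INR (fact i)) by (apply lt_0_INR, lt_O_fact).
          replace (- M * (z - s) ^ i / INR (fact i) - - D (S i) s * (z - s) ^ i / INR (fact i))
            with ((D (S i) s - M) * ((z - s) ^ i / INR (fact i))) by (field; lra).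
          assert (0 < (z - s) ^ i / INR (fact i)) by (apply Rdiv_lt_0_compat; lra).
          nra. }
      assert (Phi D z i t <= M * P / INR (fact (S i))) by lra.
      apply (Rmult_le_compat_l (INR (fact (S i)))) in H1; [|lra].
      replace (INR (fact (S i)) * (M * P / INR (fact (S i)))) with (M * P) in H1 by (field; lra).
      lra. }
    assert (HG : Gf D z i t = INR (fact i) * Phi D z i t / P) by (rewrite <- HPG; field; lra).
    rewrite HG. rewrite Hf' in Hm.
    apply (Rmult_le_reg_r P); auto.
    replace (INR (S i) * (INR (fact i) * Phi D z i t / P) * P) with
      (INR (S i) * INR (fact i) * Phi D z i t) by (field; lra). lra.
Qed.


Lemma Gf_der N a b D z : Cls N a b D -> forall j, (j < N)%nat ->
  forall x, a < x < b -> x <> z -> is_derive (Gf D z j) x (Gf D z (S j) x).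
Proof.
  intros [_ Hd]. induction j; intros Hj x Hx Hxz.
  - assert (H0 := Hd 0%nat Hj x Hx). cbn [Gf].
    auto_derive.
    + split. exists (D 1%nat x); auto. split; auto. intro; apply Hxz; lra.
    + replace (Derive (fun x => D 0%nat x) x) with (D 1%nat x)
        by (symmetry; apply is_derive_unique; auto).
      simpl INR. unfold Rminus. field. intro; apply Hxz; lra.
  - assert (H0 := Hd (S j) Hj x Hx). assert (H1 := IHj ltac:(lia) x Hx Hxz).
    set (g := Gf D z j) in *.
    assert (Hg : forall t, Gf D z (S j) t = (INR (S j) * g t - D (S j) t) / (z - t)) by reflexivity.
    apply is_derive_ext with (fun t => (INR (S j) * g t - D (S j) t) / (z - t)).
    { intros t; symmetry; apply Hg. }
    auto_derive.
    + split. exists (Gf D z (S j) x); auto. split. exists (D (S (S j)) x); auto.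
      split; auto. intro; apply Hxz; lra.
    + replace (Derive (fun x => g x) x) with (Gf D z (S j) x)
        by (symmetry; apply is_derive_unique; auto).
      replace (Derive (fun x => D (S j) x) x) with (D (S (S j)) x)
        by (symmetry; apply is_derive_unique; auto).
      rewrite !Gf_S. fold g.
      replace (match j with | 0%nat => 1 | S _ => INR j + 1 end) with (INR (S j))
        by (rewrite S_INR; destruct j; simpl; lra).
      rewrite !S_INR. unfold Rminus. field. intro; apply Hxz; lra.
Qed.

Lemma Gf_cont N a b b' D z : Cls N a b D -> forall j, (j <= N)%nat -> b' < z -> b' <= b ->
  cont_within a b' (Gf D z j).
Proof.
  intros [Hc _]. induction j; intros Hj Hb' Hb; cbn [Gf].
  - apply cw_div. apply cw_minus. apply cw_const. apply (cw_sub a b); try lra. apply Hc; lia.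
    apply cw_minus. apply cw_const. apply cw_id. intros; lra.
  - apply cw_div. apply cw_minus. apply cw_mult. apply cw_const. apply IHj; auto; lia.
    apply (cw_sub a b); try lra. apply Hc; lia.
    apply cw_minus. apply cw_const. apply cw_id. intros; lra.
Qed.

Lemma cls_G n a b z D : Cls (S n) a b D -> a <= z <= b -> Cls n a z (G D z).
Proof.
  intros HC Hz. split.
  - intros j Hj x Hx eps He.
    destruct (Req_dec x z) as [->|Hxz].
    + destruct HC as [Hc Hd].
      destruct (Hc (S j) ltac:(lia) z ltac:(lra) (eps / 2) ltac:(lra)) as (d & Hd0 & Hdd).
      exists d. split; auto. intros y Hy Hyz.
      destruct (Req_dec y z) as [->|Hyz'].
      { unfold Rminus; rewrite Rplus_opp_r, Rabs_R0; auto. }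
      rewrite G_z, G_ne by auto.
      assert (HL := lagr (S n) a b D z y j (D (S j) z - eps/2) (D (S j) z + eps/2)
                      (conj Hc Hd) ltac:(lia) ltac:(lra) ltac:(lra)).
      assert (Hb : forall s, y <= s <= z -> D (S j) z - eps / 2 <= D (S j) s <= D (S j) z + eps / 2).
      { intros s Hs. assert (Rabs (D (S j) s - D (S j) z) < eps / 2).
        { apply Hdd. lra. unfold Rabs in *; repeat destruct Rcase_abs; lra. }
        apply Rabs_def2 in H. lra. }
      specialize (HL Hb).
      assert (Hs : 1 <= INR (S j)) by (rewrite S_INR; pose proof (pos_INR j); lra).
      set (g := Gf D z j y) in *. set (d1 := D (S j) z) in *.
      assert (Hi : 0 < INR (S j)) by lra.
      replace (g - d1 / INR (S j)) with ((INR (S j) * g - d1) / INR (S j)) by (field; lra).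
      rewrite Rabs_div by lra. rewrite (Rabs_right (INR (S j))) by lra.
      apply (Rmult_lt_reg_r (INR (S j))); auto.
      replace (Rabs (INR (S j) * g - d1) / INR (S j) * INR (S j)) with (Rabs (INR (S j) * g - d1)) by (field; lra).
      assert (Rabs (INR (S j) * g - d1) <= eps / 2) by (unfold Rabs; destruct Rcase_abs; lra).
      nra.
    + assert (Hxz' : x < z) by lra.
      set (z' := (x + z) / 2).
      assert (Hcw := Gf_cont (S n) a b z' D z HC j ltac:(lia) ltac:(unfold z'; lra) ltac:(unfold z'; lra)).
      destruct (Hcw x ltac:(unfold z'; lra) eps He) as (d & Hd0 & Hdd).
      exists (Rmin d (z' - x)). split. apply Rmin_glb_lt; auto; unfold z'; lra.
      intros y Hy Hyx. pose proof (Rmin_l d (z' - x)). pose proof (Rmin_r d (z' - x)).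
      assert (y < z') by (unfold Rabs in *; destruct Rcase_abs; lra).
      rewrite !G_ne by (unfold z' in *; lra). apply Hdd; lra.
  - intros j Hj x Hx.
    apply is_derive_ext_loc with (Gf D z j).
    + assert (He : 0 < z - x) by lra. exists (mkposreal _ He). intros t Ht. simpl in Ht.
      unfold ball in Ht; simpl in Ht; unfold AbsRing_ball, abs, minus, plus, opp in Ht; simpl in Ht.
      assert (Rabs (t - x) < z - x) by exact Ht.
      rewrite G_ne; auto. unfold Rabs in *; destruct Rcase_abs; lra.
    + rewrite G_ne by lra. apply (Gf_der (S n) a b D z HC); auto; lra.
Qed.

Lemma mv k : forall a b D, Cls k a b D -> forall l, StronglySorted Rle l -> length l = S k ->
  List.Forall (fun t => a <= t <= b) l -> forall m M, (forall t, a <= t <= b -> m <= D k t <= M) ->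
  m / INR (fact k) <= dd D k l <= M / INR (fact k).
Proof.
  induction k as [|k IH]; intros a b D HC l Hs Hl Hf m M Hb.
  - destruct l as [|x [|? ?]]; simpl in Hl; try lia. simpl.
    inversion Hf; subst. specialize (Hb x H1). rewrite !Rdiv_1_r. auto.
  - assert (Hne : l <> []) by (intro; subst; simpl in Hl; lia).
    rewrite (app_removelast_last 0 Hne) in Hs, Hl, Hf |- *.
    set (l' := removelast l) in *. set (z := last l 0) in *.
    clearbody l' z.
    rewrite length_app in Hl. simpl in Hl.
    rewrite red_last by lia.
    apply Forall_app in Hf as [Hf1 Hf2]. inversion Hf2; subst.
    apply SS_app_inv in Hs as (Hs1 & _ & Hs3).
    assert (Hfs : INR (fact (S k)) = INR (S k) * INR (fact k)) by (rewrite fact_simpl, mult_INR; auto).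
    assert (Hpos : 0 < INR (S k)) by (apply lt_0_INR; lia).
    rewrite Hfs. unfold Rdiv. rewrite Rinv_mult. rewrite <- !Rmult_assoc.
    fold (Rdiv m (INR (S k))). fold (Rdiv M (INR (S k))).
    fold (Rdiv (m / INR (S k)) (INR (fact k))). fold (Rdiv (M / INR (S k)) (INR (fact k))).
    apply (IH a z).
    + apply (cls_G k a b); auto.
    + auto.
    + lia.
    + rewrite Forall_forall in *. intros t Ht. split. apply Hf1; auto. apply Hs3; simpl; auto.
    + intros t Ht. destruct (Req_dec t z) as [->|Htz].
      * rewrite G_z. destruct (Hb z H1). split; apply Rmult_le_compat_r; try lra;
        left; apply Rinv_0_lt_compat; auto.
      * rewrite G_ne by auto.
        assert (HL := lagr (S k) a b D z t k m M HC ltac:(lia) ltac:(lra) ltac:(lra)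
                     ltac:(intros s Hs; apply Hb; lra)).
        split; apply (Rmult_le_reg_l (INR (S k))); auto; field_simplify; lra.
Qed.


Lemma lub_ge (E : R -> Prop) B e : (forall z, E z -> z <= B) -> E e -> e <= real (Lub_Rbar E).
Proof.
  intros HB He. destruct (Lub_Rbar_correct E) as [Hub Hl].
  assert (H1 := Hub e He). assert (H2 := Hl (Finite B) (fun z Hz => HB z Hz)).
  destruct (Lub_Rbar E); simpl in *; auto; contradiction.
Qed.

Lemma sym_zero g u x0 a b : ~ (a <= x0 - INR 1 / 2 * u /\ x0 + INR 1 / 2 * u <= b) ->
  sym_diff 1 g u x0 a b = 0.
Proof.
  intros H. unfold sym_diff. destruct Rle_dec; auto. destruct Rle_dec; auto. tauto.
Qed.

Lemma sym_one g u x0 a b : a <= x0 - INR 1 / 2 * u -> x0 + INR 1 / 2 * u <= b ->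
  sym_diff 1 g u x0 a b = g (x0 + u / 2) - g (x0 - u / 2).
Proof.
  intros H1 H2. unfold sym_diff. destruct Rle_dec; [|tauto]. destruct Rle_dec; [|tauto].
  simpl sum_f_R0. unfold Binomial.C. simpl.
  replace (x0 + (1 / 2 - 0) * u) with (x0 + u / 2) by field.
  replace (x0 + (1 / 2 - 1) * u) with (x0 - u / 2) by field. field.
Qed.

Lemma sym_bound g u x0 a b m M : 0 <= u -> m <= M -> (forall t, a <= t <= b -> m <= g t <= M) ->
  Rabs (sym_diff 1 g u x0 a b) <= M - m.
Proof.
  intros Hu Hm Hb.
  destruct (Rle_dec a (x0 - INR 1 / 2 * u)) as [H1|H1];
  [destruct (Rle_dec (x0 + INR 1 / 2 * u) b) as [H2|H2]|].
  - rewrite sym_one by auto. simpl INR in *.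
    assert (A := Hb (x0 + u / 2) ltac:(lra)). assert (B := Hb (x0 - u / 2) ltac:(lra)).
    unfold Rabs; destruct Rcase_abs; lra.
  - rewrite sym_zero by tauto. rewrite Rabs_R0; lra.
  - rewrite sym_zero by tauto. rewrite Rabs_R0; lra.
Qed.

Definition Eset g t a b := fun z => exists u x0, 0 < u <= t /\ a <= x0 <= b /\
                              z = Rabs (sym_diff 1 g u x0 a b).

Lemma omega_ge g a b mn mx : a < b -> a <= mn <= b -> a <= mx <= b ->
  (forall t, a <= t <= b -> g mn <= g t <= g mx) ->
  g mx - g mn <= omega 1 g (b - a) a b.
Proof.
  intros Hab Hn Hx Hb. unfold omega.
  apply (lub_ge _ (g mx - g mn)).
  - intros z (u & x0 & Hu & Hx0 & ->). apply sym_bound; try lra.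
    destruct (Hb mn Hn); lra. auto.
  - destruct (Req_dec mx mn) as [->|Hne].
    + exists (b - a), a. split; [lra|]. split; [lra|].
      rewrite sym_zero. rewrite Rabs_R0; ring. simpl INR. lra.
    + destruct (Rle_dec mn mx) as [Hle|Hle].
      * exists (mx - mn), ((mx + mn) / 2). split; [lra|]. split; [lra|].
        rewrite sym_one by (simpl INR; lra).
        replace ((mx + mn) / 2 + (mx - mn) / 2) with mx by field.
        replace ((mx + mn) / 2 - (mx - mn) / 2) with mn by field.
        rewrite Rabs_right; auto. destruct (Hb mn Hn); lra.
      * exists (mn - mx), ((mx + mn) / 2). split; [lra|]. split; [lra|].
        rewrite sym_one by (simpl INR; lra).
        replace ((mx + mn) / 2 + (mn - mx) / 2) with mn by field.
        replace ((mx + mn) / 2 - (mn - mx) / 2) with mx by field.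
        rewrite Rabs_left1. ring. destruct (Hb mn Hn); lra.
Qed.

Lemma omega_const g a b t : a < b -> b - a <= t -> omega 1 g t a b = omega 1 g (b - a) a b.
Proof.
  intros Hab Ht. unfold omega. f_equal. apply Lub_Rbar_eqset. intros z. split.
  - intros (u & x0 & Hu & Hx0 & ->).
    destruct (Rle_dec u (b - a)).
    + exists u, x0. repeat split; auto; lra.
    + rewrite sym_zero by (simpl INR; lra). exists (b - a), a. split; [lra|]. split; [lra|].
      rewrite sym_zero. auto. simpl INR; lra.
  - intros (u & x0 & Hu & Hx0 & ->). exists u, x0. repeat split; auto; lra.
Qed.

Lemma maxlist_ge v l : In v l -> v <= maxlist l.
Proof.
  destruct l as [|a l]; simpl; [tauto|].
  assert (H : forall l a, a <= fold_right Rmax a l /\ forall v, In v l -> v <= fold_right Rmax a l).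
  { clear. induction l as [|h t IH]; intros a; simpl. split; [lra|tauto].
    destruct (IH a) as [H1 H2]. split.
    - eapply Rle_trans; [apply H1|apply Rmax_r].
    - intros v [<-|Hv]. apply Rmax_l. eapply Rle_trans; [apply H2; auto|apply Rmax_r]. }
  intros [Hv|Hv]. subst. apply (proj1 (H l _)). apply (proj2 (H l a)); auto.
Qed.

Lemma Lambda_val r (x : nat -> R) g a b : x O = a -> x (S r) = b -> a < b ->
  Lambda_pqr (S r) x (fun t => omega 1 g t a b) 0 (S r) r = omega 1 g (b - a) a b / (2 * (b - a)).
Proof.
  intros Ha Hb Hab. unfold Lambda_pqr, dpq, y_after, y_before.
  rewrite Nat.eqb_refl, Nat.sub_diag. simpl seq. simpl map. simpl prodR.
  rewrite Ha, Hb.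
  replace (Rmin (b + (b - a) - a) (b - (a - (b - a)))) with (2 * (b - a))
    by (unfold Rmin; destruct Rle_dec; ring).
  replace (Z.of_nat 0 + Z.of_nat r - Z.of_nat (S r) - 1)%Z with (-2)%Z by lia.
  set (W := omega 1 g (b - a) a b). set (L := b - a).
  rewrite (RInt_ext _ (fun u => W * / (u * u))).
  2: { intros u Hu. rewrite Rmin_left, Rmax_right in Hu by (unfold L; lra).
       rewrite omega_const by (unfold L in *; lra). fold W. simpl powerRZ. rewrite Rmult_1_r, Rmult_comm. reflexivity. }
  assert (HI : is_RInt (fun u => W * / (u * u)) L (2 * L)
                 (minus ((fun u => - W / u) (2 * L)) ((fun u => - W / u) L))).
  { apply (is_RInt_derive (fun u => - W / u)).
    + intros u Hu. rewrite Rmin_left, Rmax_right in Hu by (unfold L; lra).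
      auto_derive. unfold L in *; lra. field. unfold L in *; lra.
    + intros u Hu. rewrite Rmin_left, Rmax_right in Hu by (unfold L; lra).
      apply (ex_derive_continuous (fun u => W * / (u * u)) u). auto_derive. apply Rmult_integral_contrapositive; unfold L in *; split; lra. }
  rewrite (is_RInt_unique _ _ _ _ HI).
  unfold minus, plus, opp; simpl. field. unfold L; lra.
Qed.


Lemma x_mono (x : nat -> R) N : (forall i, (i < N)%nat -> x i <= x (S i)) ->
  forall i j, (i <= j)%nat -> (j <= N)%nat -> x i <= x j.
Proof.
  intros H i j. induction j; intros Hij HjN.
  - replace i with 0%nat by lia. lra.
  - destruct (Nat.eq_dec i (S j)) as [->|Hne]; [lra|].
    eapply Rle_trans; [apply IHj; lia|]. apply H; lia.
Qed.

Lemma SS_map (x : nat -> R) N : (forall i, (i < N)%nat -> x i <= x (S i)) ->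
  forall n s, (s + n <= S N)%nat -> StronglySorted Rle (map x (seq s n)).
Proof.
  intros H. induction n; intros s Hs; simpl. constructor.
  constructor. apply IHn; lia.
  apply Forall_forall. intros v Hv. apply in_map_iff in Hv as (j & <- & Hj).
  apply in_seq in Hj. apply (x_mono x N); auto; lia.
Qed.

Lemma dw_isd a b g g' x : deriv_within a b g g' -> a < x < b -> is_derive g x (g' x).
Proof.
  intros Hd Hx. apply is_derive_Reals. intros eps He.
  destruct (Hd x ltac:(lra) (eps / 2) ltac:(lra)) as (d & Hd0 & H).
  assert (Hp : 0 < Rmin d (Rmin (x - a) (b - x))).
  { apply Rmin_glb_lt; auto. apply Rmin_glb_lt; lra. }
  exists (mkposreal _ Hp). intros h Hh Hhd. simpl in Hhd.
  pose proof (Rmin_l d (Rmin (x - a) (b - x))). pose proof (Rmin_r d (Rmin (x - a) (b - x))).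
  pose proof (Rmin_l (x - a) (b - x)). pose proof (Rmin_r (x - a) (b - x)).
  assert (Hy : a <= x + h <= b) by (unfold Rabs in Hhd; destruct Rcase_abs; lra).
  specialize (H (x + h) Hy ltac:(replace (x + h - x) with h by ring; lra)).
  replace (x + h - x) with h in H by ring.
  replace ((g (x + h) - g x) / h - g' x) with ((g (x + h) - g x - g' x * h) / h) by (field; auto).
  rewrite Rabs_div by auto.
  assert (0 < Rabs h) by (apply Rabs_pos_lt; auto).
  apply (Rmult_lt_reg_r (Rabs h)); auto.
  replace (Rabs (g (x + h) - g x - g' x * h) / Rabs h * Rabs h) with (Rabs (g (x + h) - g x - g' x * h))
    by (field; lra).
  nra.
Qed.

Theorem lemma3p1 : forall r : nat, exists c : R,
  forall (x : nat -> R) (f : R -> R) (D : nat -> R -> R),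
    (forall i, (i < S r)%nat -> x i <= x (S i)) ->
    x O < x (S r) ->
    (forall t, D O t = f t) ->
    Cr_on (x O) (x (S r)) r D ->
    Rabs (divdiff D (map x (seq 0 (S (S r)))))
      <= c * Lambda_r (S r) r x (fun t => omega 1 (D r) t (x O) (x (S r))).
Proof.
  intros r. exists 2. intros x f D Hmono Hlt _ [Hc Hd].
  set (a := x O) in *. set (b := x (S r)) in *.
  assert (HC : Cls r a b D).
  { split; auto. intros j Hj y Hy. apply (dw_isd a b); auto. }
  assert (Hab : a <= b) by lra.
  assert (Hg : forall c, a <= c <= b -> continuity_pt (fun y => D r (clamp a b y)) c).
  { intros c Hc'. apply cw_cont; auto. }
  destruct (continuity_ab_maj _ a b Hab Hg) as (mx & Hmx & Hmx').
  destruct (continuity_ab_min _ a b Hab Hg) as (mn & Hmn & Hmn').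
  rewrite clamp_id in Hmx, Hmn by auto.
  assert (Hb : forall t, a <= t <= b -> D r mn <= D r t <= D r mx).
  { intros t Ht. specialize (Hmx t Ht). specialize (Hmn t Ht). rewrite clamp_id in * by auto. lra. }
  set (l := map x (seq 0 (S (S r)))).
  assert (Hs : StronglySorted Rle l) by (apply (SS_map x (S r)); auto).
  assert (Hin : forall j, (j <= S r)%nat -> a <= x j <= b).
  { intros j Hj. split; apply (x_mono x (S r)); auto; lia. }
  assert (Hl1 : tl l = map x (seq 1 (S r))) by reflexivity.
  assert (Hl2 : removelast l = map x (seq 0 (S r))).
  { unfold l. rewrite (seq_S (S r)), map_app. apply removelast_last. }
  assert (Hlast : last l 0 = b).
  { unfold l. rewrite (seq_S (S r)), map_app. apply last_last. }
  assert (Hhd : hd 0 l = a) by reflexivity.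
  unfold divdiff.
  replace (length l - 1)%nat with (S r) by (unfold l; rewrite length_map, length_seq; lia).
  rewrite std; auto.
  2: { unfold l; rewrite length_map, length_seq; auto. }
  2: { rewrite Hhd, Hlast; auto. }
  rewrite Hl1, Hl2, Hhd, Hlast.
  assert (HF : forall s n, (s + n <= S (S r))%nat -> List.Forall (fun t => a <= t <= b) (map x (seq s n))).
  { intros s n Hsn. apply Forall_forall. intros v Hv. apply in_map_iff in Hv as (j & <- & Hj).
    apply in_seq in Hj. apply Hin; lia. }
  assert (HA := mv r a b D HC (map x (seq 1 (S r))) ltac:(apply (SS_map x (S r)); auto; lia)
                  ltac:(rewrite length_map, length_seq; auto) ltac:(apply HF; lia) _ _ Hb).
  assert (HCC := mv r a b D HC (map x (seq 0 (S r))) ltac:(apply (SS_map x (S r)); auto; lia)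
                  ltac:(rewrite length_map, length_seq; auto) ltac:(apply HF; lia) _ _ Hb).
  set (A := dd D r (map x (seq 1 (S r)))) in *.
  set (C := dd D r (map x (seq 0 (S r)))) in *.
  set (m := D r mn) in *. set (M := D r mx) in *.
  assert (Hfact : 1 <= INR (fact r)) by (apply (le_INR 1); apply lt_O_fact).
  assert (HW := omega_ge (D r) a b mn mx ltac:(lra) Hmn' Hmx' Hb).
  fold m M in HW.
  set (W := omega 1 (D r) (b - a) a b) in *.
  assert (HL : Lambda_r (S r) r x (fun t => omega 1 (D r) t a b) >= W / (2 * (b - a))).
  { apply Rle_ge. unfold W. rewrite <- (Lambda_val r x (D r) a b) by auto.
    apply maxlist_ge. apply (in_map (fun pq => Lambda_pqr (S r) x (fun t => omega 1 (D r) t a b) (fst pq) (snd pq) r)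
      _ (0%nat, S r)).
    unfold Qnr. apply filter_In. split.
    - apply in_prod; apply in_seq; lia.
    - simpl. apply Nat.leb_refl. }
  assert (Hmm : m <= M) by (destruct (Hb mn Hmn'); auto).
  assert (HAC : Rabs (A - C) <= (M - m)).
  { assert ((M - m) / INR (fact r) <= M - m).
    { unfold Rdiv. rewrite <- (Rmult_1_r (M - m)) at 2.
      apply Rmult_le_compat_l; [lra|]. rewrite <- Rinv_1. apply Rinv_le_contravar; lra. }
    assert (m / INR (fact r) <= M / INR (fact r)) by lra.
    assert ((M - m) / INR (fact r) = M / INR (fact r) - m / INR (fact r)) by (field; lra).
    unfold Rabs; destruct Rcase_abs; lra. }
  rewrite Rabs_div by lra. rewrite (Rabs_right (b - a)) by lra.
  apply Rle_trans with (W / (b - a)).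
  - unfold Rdiv. apply Rmult_le_compat_r. left; apply Rinv_0_lt_compat; lra. lra.
  - replace (W / (b - a)) with (2 * (W / (2 * (b - a)))) by (field; lra). lra.
Qed.
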